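(* Suppose the designer is accuracy aligned ($A_1\ge A_0$ and $B_1\ge B_0$) and $\phi<1$. Then there exist $L\in(0,1)$ and $U\in(0,1)$, depending only on $(A_1,A_0,B_1,B_0,\phi)$, such that for every type distribution $F$ satisfying the assumptions below with $F(0)<L$ or $F(0)>U$, a null equilibrium exists.
   Context: A unit mass of individuals has costs $\gamma_i\in\mathbb{R}$ of compliance ($\beta_i=1$) distributed according to a continuously differentiable CDF $F$ with log-concave density $f$ of full support on $\mathbb{R}$. A classifier $\delta=(\delta_1,\delta_0)\in[0,1]^2$ assigns $d_i$ with $\Pr[d_i=s_i\mid s_i]=\delta_{s_i}$ where $\Pr[s_i=\beta_i]=\phi\in(\tfrac12,1]$; individuals with $d_i=1$ receive reward $r\in\mathbb{R}$. Let $\rho(\delta)=(\delta_1+\delta_0-1)(2\phi-1)$; $\delta$ is null iff $\rho=0$. Individuals comply iff $\gamma_i\le r\rho$; compliance rate $\pi=F(r\rho)$. Designer payoffs $(A_1,A_0,B_1,B_0)\in\mathbb{R}_+^4$ ($A_1$: complier with $d_i=1$; $A_0$: complier with $d_i=0$; $B_1$: non-complier with $d_i=0$; $B_0$: non-complier with $d_i=1$), expected payoff $EU_D(\delta\mid r)=\pi[\phi(A_1\delta_1+A_0(1-\delta_1))+(1-\phi)(A_0\delta_0+A_1(1-\delta_0))]+(1-\pi)[\phi(B_1\delta_0+B_0(1-\delta_0))+(1-\phi)(B_0\delta_1+B_1(1-\delta_1))]$. Rewards are budget balanced and each individual also gets $t\pi$, $t\ge0$; individual $i$'s payoff from $r$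 given $\delta$ is $U_i(r)=-\gamma_i+r\rho(1-F(r\rho))+tF(r\rho)$ if $\gamma_i\le r\rho$, else $-r\rho F(r\rho)+tF(r\rho)$. The median individual has cost $\gamma_\mu$ with $F(\gamma_\mu)=\tfrac12$. An equilibrium is a pair $(r^*,\delta^* )$ such that $r^*$ maximizes $U_\mu(r)$ given $\delta^*$ and $\delta^*$ maximizes $EU_D(\delta\mid r^* )$ over $[0,1]^2$; a null equilibrium is one with $r^*=0$ and/or $\delta^*$ null. *)

(* Defs.v *)
From Stdlib Require Import Reals Lra.
From Coquelicot Require Import Coquelicot.
Open Scope R_scope.

Definition type_dist (F f : R -> R) : Prop :=
  (forall x, is_derive F x (f x)) /\
  (forall x, continuous f x) /\
  (forall x, 0 < f x) /\
  is_lim F m_infty 0 /\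
  is_lim F p_infty 1 /\
  (forall x y l, 0 <= l <= 1 ->
     l * ln (f x) + (1 - l) * ln (f y) <= ln (f (l * x + (1 - l) * y))).

Definition rho (phi d1 d0 : R) : R := (d1 + d0 - 1) * (2 * phi - 1).

Definition null_classifier (phi d1 d0 : R) : Prop := rho phi d1 d0 = 0.

Definition EU_D (A1 A0 B1 B0 phi : R) (F : R -> R) (r d1 d0 : R) : R :=
  let pi := F (r * rho phi d1 d0) in
  pi * (phi * (A1 * d1 + A0 * (1 - d1)) + (1 - phi) * (A0 * d0 + A1 * (1 - d0)))
  + (1 - pi) * (phi * (B1 * d0 + B0 * (1 - d0)) + (1 - phi) * (B0 * d1 + B1 * (1 - d1))).

Definition U_ind (phi t : R) (F : R -> R) (gamma r d1 d0 : R) : R :=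
  let x := r * rho phi d1 d0 in
  if Rle_dec gamma x
  then - gamma + x * (1 - F x) + t * F x
  else - x * F x + t * F x.

(* (r, (d1,d0)) is an equilibrium, gmu being the median cost (F gmu = 1/2). *)
Definition is_equilibrium (A1 A0 B1 B0 phi t : R) (F : R -> R) (gmu : R)
  (r d1 d0 : R) : Prop :=
  0 <= d1 <= 1 /\ 0 <= d0 <= 1 /\
  (forall r', U_ind phi t F gmu r' d1 d0 <= U_ind phi t F gmu r d1 d0) /\
  (forall e1 e0, 0 <= e1 <= 1 -> 0 <= e0 <= 1 ->
     EU_D A1 A0 B1 B0 phi F r e1 e0 <= EU_D A1 A0 B1 B0 phi F r d1 d0).

Definition is_null_equilibrium (A1 A0 B1 B0 phi t : R) (F : R -> R) (gmu : R)
  (r d1 d0 : R) : Prop :=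
  is_equilibrium A1 A0 B1 B0 phi t F gmu r d1 d0 /\
  (r = 0 \/ null_classifier phi d1 d0).

(* Main.v *)
Require Import Defs.
From Stdlib Require Import Reals Lra Psatz.
From Coquelicot Require Import Coquelicot.
Open Scope R_scope.

Lemma F_bounds (F f : R -> R) x : type_dist F f -> 0 <= F x <= 1.
Proof.
  intros [Hd [_ [Hf [Hm [Hp _]]]]].
  assert (Hinc : forall u v, u < v -> F u < F v).
  { intros u v Huv. apply (incr_function F m_infty p_infty f); simpl; auto.
    intros; apply Hf. }
  apply is_lim_spec in Hm. apply is_lim_spec in Hp.
  split.
  - destruct (Rle_dec 0 (F x)) as [h|h]; auto.
    assert (he : 0 < - F x) by lra.
    destruct (Hm (mkposreal _ he)) as [M HM]. simpl in HM.
    set (y := Rmin M x - 1).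
    assert (y < M) by (unfold y; pose proof (Rmin_l M x); lra).
    assert (y < x) by (unfold y; pose proof (Rmin_r M x); lra).
    specialize (HM y H). specialize (Hinc y x H0).
    apply Rabs_def2 in HM. lra.
  - destruct (Rle_dec (F x) 1) as [h|h]; auto.
    assert (he : 0 < F x - 1) by lra.
    destruct (Hp (mkposreal _ he)) as [M HM]. simpl in HM.
    set (y := Rmax M x + 1).
    assert (M < y) by (unfold y; pose proof (Rmax_l M x); lra).
    assert (x < y) by (unfold y; pose proof (Rmax_r M x); lra).
    specialize (HM y H). specialize (Hinc x y H0).
    apply Rabs_def2 in HM. lra.
Qed.

Lemma EU_diff A1 A0 B1 B0 phi F e1 e0 d1 d0 :
  EU_D A1 A0 B1 B0 phi F 0 e1 e0 - EU_D A1 A0 B1 B0 phi F 0 d1 d0 =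
  (F 0 * phi * (A1 - A0) - (1 - F 0) * (1 - phi) * (B1 - B0)) * (e1 - d1) +
  (- F 0 * (1 - phi) * (A1 - A0) + (1 - F 0) * phi * (B1 - B0)) * (e0 - d0).
Proof.
  unfold EU_D. rewrite !Rmult_0_l. ring.
Qed.

Lemma null_eq_of (A1 A0 B1 B0 phi t : R) (F : R -> R) (gmu : R) :
  0 <= A1 - A0 -> 0 <= B1 - B0 -> 1/2 < phi -> phi < 1 ->
  0 <= F 0 <= 1 ->
  ~ (0 < F 0 * phi * (A1 - A0) - (1 - F 0) * (1 - phi) * (B1 - B0) /\
     0 < - F 0 * (1 - phi) * (A1 - A0) + (1 - F 0) * phi * (B1 - B0)) ->
  exists r d1 d0 : R, is_null_equilibrium A1 A0 B1 B0 phi t F gmu r d1 d0.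
Proof.
  intros Ha Hb Hp1 Hp2 HF Hn.
  assert (Hs : 0 <= (F 0 * phi * (A1 - A0) - (1 - F 0) * (1 - phi) * (B1 - B0)) +
     (- F 0 * (1 - phi) * (A1 - A0) + (1 - F 0) * phi * (B1 - B0))).
  { replace (F 0 * phi * (A1 - A0) - (1 - F 0) * (1 - phi) * (B1 - B0) +
      (- F 0 * (1 - phi) * (A1 - A0) + (1 - F 0) * phi * (B1 - B0)))
      with ((2*phi-1) * (F 0*(A1-A0) + (1-F 0)*(B1-B0))) by ring.
    apply Rmult_le_pos; nra. }
  set (c1 := F 0 * phi * (A1 - A0) - (1 - F 0) * (1 - phi) * (B1 - B0)) in *.
  set (c0 := - F 0 * (1 - phi) * (A1 - A0) + (1 - F 0) * phi * (B1 - B0)) in *.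
  assert (Hchoice : exists d1 d0, 0 <= d1 <= 1 /\ 0 <= d0 <= 1 /\ d1 + d0 = 1 /\
     forall e1 e0, 0 <= e1 <= 1 -> 0 <= e0 <= 1 -> c1 * (e1 - d1) + c0 * (e0 - d0) <= 0).
  { destruct (Rle_dec c0 0) as [h0|h0].
    - exists 1, 0. repeat split; try lra. intros e1 e0 [] []; nra.
    - assert (c1 <= 0) by (destruct (Rle_dec c1 0); auto; exfalso; apply Hn; lra).
      exists 0, 1. repeat split; try lra. intros e1 e0 [] []; nra. }
  destruct Hchoice as [d1 [d0 [H1 [H0 [Hsum Hopt]]]]].
  exists 0, d1, d0.
  assert (Hrho : rho phi d1 d0 = 0) by (unfold rho; replace (d1 + d0 - 1) with 0 by lra; ring).
  split; [split; [exact H1 | split; [exact H0 | split]] | right; exact Hrho].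
  - intros r'. unfold U_ind. rewrite Hrho, !Rmult_0_r. lra.
  - intros e1 e0 He1 He0. pose proof (EU_diff A1 A0 B1 B0 phi F e1 e0 d1 d0).
    pose proof (Hopt e1 e0 He1 He0). fold c1 c0 in H. lra.
Qed.

Theorem corollary4 (A1 A0 B1 B0 phi : R) :
  0 <= A1 -> 0 <= A0 -> 0 <= B1 -> 0 <= B0 ->
  A0 <= A1 -> B0 <= B1 ->
  1 / 2 < phi -> phi < 1 ->
  exists L Ub : R, 0 < L < 1 /\ 0 < Ub < 1 /\
    forall (t : R) (F f : R -> R), 0 <= t -> type_dist F f ->
      (F 0 < L \/ Ub < F 0) ->
      forall gmu : R, F gmu = 1 / 2 ->
        exists r d1 d0 : R, is_null_equilibrium A1 A0 B1 B0 phi t F gmu r d1 d0.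
Proof.
  intros HA1 HA0 HB1 HB0 HA HB Hp1 Hp2.
  set (a := A1 - A0). set (b := B1 - B0).
  assert (Ha : 0 <= a) by (unfold a; lra). assert (Hb : 0 <= b) by (unfold b; lra).
  destruct (Rlt_dec 0 a) as [ha|ha]; [destruct (Rlt_dec 0 b) as [hb|hb]|].
  - assert (D1 : 0 < phi * a + (1 - phi) * b) by nra.
    assert (D2 : 0 < phi * b + (1 - phi) * a) by nra.
    exists ((1 - phi) * b / (phi * a + (1 - phi) * b)),
           (phi * b / (phi * b + (1 - phi) * a)).
    split; [split|split; [split|]].
    + apply Rdiv_lt_0_compat; nra.
    + apply Rmult_lt_reg_r with (phi * a + (1 - phi) * b); auto.
      unfold Rdiv; rewrite Rmult_assoc, Rinv_l; nra.
    + apply Rdiv_lt_0_compat; nra.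
    + apply Rmult_lt_reg_r with (phi * b + (1 - phi) * a); auto.
      unfold Rdiv; rewrite Rmult_assoc, Rinv_l; nra.
    + intros t F f Ht HFd HL gmu Hg.
      apply null_eq_of; try lra. apply (F_bounds F f 0 HFd).
      fold a b. intros [c1 c0].
      destruct HL as [HL|HL].
      * apply Rmult_lt_compat_r with (r := phi * a + (1 - phi) * b) in HL; auto.
        unfold Rdiv in HL; rewrite Rmult_assoc, Rinv_l in HL; nra.
      * apply Rmult_lt_compat_r with (r := phi * b + (1 - phi) * a) in HL; auto.
        unfold Rdiv in HL; rewrite Rmult_assoc, Rinv_l in HL; nra.
  - exists (1/2), (1/2). split; [lra|split;[lra|]].
    intros t F f Ht HFd HL gmu Hg.
    pose proof (F_bounds F f 0 HFd).
    apply null_eq_of; try lra. fold a b. assert (b = 0) by lra.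
    intros [c1 c0]. rewrite H0 in c0. assert (0 <= F 0 * a) by nra. nra.
  - exists (1/2), (1/2). split; [lra|split;[lra|]].
    intros t F f Ht HFd HL gmu Hg.
    pose proof (F_bounds F f 0 HFd).
    apply null_eq_of; try lra. fold a b. assert (a = 0) by lra.
    intros [c1 c0]. rewrite H0 in c1. assert (0 <= (1 - F 0) * b) by nra. nra.
Qed.
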